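(* Let $\mathcal{S}_m$ be the set of pairs $(R,\theta)$ with $R\in\mathbb{R}^{m\times m}$, $\theta\in\mathbb{R}^m$, $R=R'=R^2$ and $R\theta=0$. Define the loss $L((R_1,\theta_1),(R_2,\theta_2))=\|R_1-R_2\|^2+\|\theta_1-\theta_2\|^2$, with $\|A\|^2=\mathrm{Tr}(AA')$. Let $P_n$ be a probability distribution on $\mathcal{S}_m$ (the posterior) under which $\|\theta_2\|^2$ is integrable, and let $\bar R$ and $\bar\theta$ be the means of $R_2$ and $\theta_2$ under $P_n$. Let $2\bar R-\bar\theta\bar\theta'=\sum_{j=1}^m\lambda_jU_jU_j'$ with $\lambda_1\ge\dots\ge\lambda_m$ and $U_1,\dots,U_m$ orthonormal be a singular value (spectral) decomposition. Define $f(R,\theta)=\int L((R,\theta),(R_2,\theta_2))\,dP_n(R_2,\theta_2)$ for $(R,\theta)\in\mathcal{S}_m$. Then $f$ is minimized over $\mathcal{S}_m$ by $R=\sum_{j=1}^kU_jU_j'$ and $\theta=(I-R)\bar\theta$, where $k\in\{0,1,\dots,m\}$ minimizes $k-\sum_{j=1}^k\lambda_j$. The minimizer is unique if and only if there is a unique minimizing $k$ and $\lambda_k>\lambda_{k+1}$ for that $k$.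
   Context: $\mathcal{S}_m$ parametrizes affine subspaces of $\mathbb{R}^m$: $R$ is the projection matrix of the parallel linear subspace and $\theta$ is the projection of the origin onto the affine subspace. *)

(* Defs.v *)
From HB Require Import structures.
From mathcomp Require Import all_boot all_order all_algebra.
From mathcomp Require Import all_classical all_reals all_analysis.
Set Implicit Arguments. Unset Strict Implicit. Unset Printing Implicit Defensive.
Import Order.TTheory GRing.Theory Num.Theory.
Import numFieldNormedType.Exports.
Local Open Scope ring_scope.

Definition frob2 (R : realType) (p q : nat) (A : 'M[R]_(p, q)) : R :=
  \tr (A *m A^T).

Definition inS (R : realType) (m : nat) (P : 'M[R]_m) (th : 'cV[R]_m) : Prop :=
  P = P^T /\ P *m P = P /\ P *m th = 0.

Definition loss (R : realType) (m : nat) (P1 : 'M[R]_m) (t1 : 'cV[R]_m)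
  (P2 : 'M[R]_m) (t2 : 'cV[R]_m) : R :=
  frob2 (P1 - P2) + frob2 (t1 - t2).

(* k - sum_{j=1}^k lambda_j  (lambda indexed from 0 in Rocq) *)
Definition kcost (R : realType) (m : nat) (lam : 'I_m -> R) (k : nat) : R :=
  k%:R - \sum_(j < m | (j < k)%N) lam j.

(* lambda_k > lambda_{k+1} (1-indexed), with conventions lambda_0 = +oo,
   lambda_{m+1} = -oo, i.e. vacuous for k = 0 and k = m *)
Definition gap_at (R : realType) (m : nat) (lam : 'I_m -> R) (k : nat) : Prop :=
  forall i j : 'I_m, (0 < k)%N -> (i : nat) = k.-1 -> (j : nat) = k -> lam j < lam i.

Definition projk (R : realType) (m : nat) (U : 'M[R]_m) (k : nat) : 'M[R]_m :=
  \sum_(j < m | (j < k)%N) (col j U *m (col j U)^T).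

(* Main.v *)
Require Import Defs.
From HB Require Import structures.
From mathcomp Require Import all_boot all_order all_algebra.
From mathcomp Require Import all_classical all_reals all_analysis.
From mathcomp Require Import ring lra measurable_realfun.
Import Order.TTheory GRing.Theory Num.Theory.
Import numFieldNormedType.Exports.
Set Implicit Arguments. Unset Strict Implicit. Unset Printing Implicit Defensive.
Local Open Scope ring_scope.
Definition ip (R : realType) (p q : nat) (A B : 'M[R]_(p, q)) : R := \tr (A *m B^T).

Lemma ipE (R : realType) (p q : nat) (A B : 'M[R]_(p, q)) :
  ip A B = \sum_i \sum_j A i j * B i j.
Proof. by apply: eq_bigr => i _; rewrite !mxE; apply: eq_bigr => j _; rewrite !mxE. Qed.

Lemma frob2E (R : realType) (p q : nat) (A : 'M[R]_(p, q)) :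
  frob2 A = \sum_i \sum_j A i j ^+ 2.
Proof. by rewrite /frob2 -/(ip A A) ipE; apply: eq_bigr => i _; apply: eq_bigr => j _; rewrite expr2. Qed.

Lemma frob2_ge0 (R : realType) (p q : nat) (A : 'M[R]_(p, q)) : 0 <= frob2 A.
Proof. by rewrite frob2E; apply: sumr_ge0 => i _; apply: sumr_ge0 => j _; apply: sqr_ge0. Qed.


Lemma frob2B (R : realType) (p q : nat) (A B : 'M[R]_(p, q)) :
  frob2 (A - B) = frob2 A + frob2 B - 2 * ip A B.
Proof.
rewrite !frob2E ipE mulr_sumr -big_split -sumrB /=; apply: eq_bigr => i _.
rewrite mulr_sumr -big_split -sumrB /=; apply: eq_bigr => j _.
rewrite !mxE; ring.
Qed.

Lemma ipC (R : realType) (p q : nat) (A B : 'M[R]_(p, q)) : ip A B = ip B A.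
Proof. by rewrite !ipE; apply: eq_bigr => i _; apply: eq_bigr => j _; rewrite mulrC. Qed.
Lemma frob2_eq0 (R : realType) (p q : nat) (A : 'M[R]_(p, q)) : frob2 A = 0 -> A = 0.
Proof.
rewrite frob2E => h; apply/matrixP => i j; rewrite mxE.
have h1 : forall i0, \sum_j A i0 j ^+ 2 = 0.
  move=> i0; apply: (psumr_eq0P (P:=predT) _ h) => // i1 _.
  by apply: sumr_ge0 => j1 _; apply: sqr_ge0.
have := psumr_eq0P (P:=predT) (fun j _ => sqr_ge0 (A i j)) (h1 i) (i:=j) isT.
by move/eqP; rewrite sqrf_eq0 => /eqP.
Qed.
Lemma symidem_W (R : realType) (m : nat) (S U : 'M[R]_m) (l : 'I_m) :
  S^T = S -> S *m S = S ->
  (U^T *m S *m U) l l = \sum_i ((S *m U) i l) ^+ 2.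
Proof.
move=> hT hI.
have -> : U^T *m S *m U = (S *m U)^T *m (S *m U).
  by rewrite trmx_mul hT mulmxA -(mulmxA _ S S) hI.
by rewrite mxE; apply: eq_bigr => i _; rewrite !mxE expr2.
Qed.

Lemma sum_diagE (R : realType) (m : nat) (U : 'M[R]_m) (d : 'I_m -> R) :
  \sum_(j < m) d j *: (col j U *m (col j U)^T) = U *m diag_mx (\row_j d j) *m U^T.
Proof.
apply/matrixP => a b; rewrite summxE !mxE; apply: eq_bigr => j _.
by rewrite mul_mx_diag !mxE big_ord1 !mxE; ring.
Qed.

Lemma projkE (R : realType) (m : nat) (U : 'M[R]_m) (k : nat) :
  projk U k = U *m diag_mx (\row_j ((j < k)%N%:R : R)) *m U^T.
Proof.
rewrite -sum_diagE /projk [RHS](bigID (fun j : 'I_m => (j < k)%N)) /=.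
rewrite [X in _ = _ + X]big1 ?addr0; last by move=> j /negbTE ->; rewrite scale0r.
by apply: eq_bigr => j ->; rewrite scale1r.
Qed.

Lemma trmx_UDU (R : realType) (m : nat) (U : 'M[R]_m) (d : 'rV[R]_m) :
  (U *m diag_mx d *m U^T)^T = U *m diag_mx d *m U^T.
Proof. by rewrite !trmx_mul trmxK tr_diag_mx mulmxA. Qed.

Lemma tr_diag (R : realType) (m : nat) (W : 'M[R]_m) (d : 'rV[R]_m) :
  \tr (W *m diag_mx d) = \sum_l W l l * d 0 l.
Proof. by rewrite mul_mx_diag; apply: eq_bigr => l _; rewrite mxE. Qed.

Lemma ip_UDU (R : realType) (m : nat) (U X : 'M[R]_m) (d : 'rV[R]_m) :
  ip X (U *m diag_mx d *m U^T) = \sum_l (U^T *m X *m U) l l * d 0 l.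
Proof.
transitivity (\tr (U^T *m X *m U *m diag_mx d)); last exact: tr_diag.
rewrite /ip trmx_UDU !mulmxA mxtrace_mulC !mulmxA //.
Qed.

Lemma tr_UU (R : realType) (m : nat) (U X : 'M[R]_m) :
  U^T *m U = 1%:M -> \tr X = \sum_l (U^T *m X *m U) l l.
Proof.
move=> h; have h' := mulmx1C h.
transitivity (\tr (X *m (U *m U^T))); first by rewrite h' mulmx1.
by rewrite mulmxA mxtrace_mulC mulmxA.
Qed.
Lemma ipBZr (R : realType) (p q : nat) (X Y Z : 'M[R]_(p, q)) (a : R) :
  ip X (a *: Y - Z) = a * ip X Y - ip X Z.
Proof.
rewrite !ipE mulr_sumr -sumrB; apply: eq_bigr => i _.
rewrite mulr_sumr -sumrB; apply: eq_bigr => j _; rewrite !mxE; ring.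
Qed.

Lemma alg_main (R : realType) (m : nat) (Rm Rbar M : 'M[R]_m) (th thbar : 'cV[R]_m) :
  inS Rm th -> M = 2 *: Rbar - thbar *m thbar^T ->
  frob2 Rm + frob2 th - 2 * (ip Rm Rbar + ip th thbar)
   = (\tr Rm - ip Rm M) + frob2 (th - (1%:M - Rm) *m thbar) - frob2 thbar.
Proof.
move=> [hT [hI h0]] ->.
have e1 : frob2 Rm = \tr Rm by rewrite /frob2 -hT hI.
have e2 : ip Rm (2 *: Rbar - thbar *m thbar^T) = 2 * ip Rm Rbar - ip Rm (thbar *m thbar^T).
  exact: ipBZr.
have e3 : ip th ((1%:M - Rm) *m thbar) = ip th thbar.
  have -> : (1%:M - Rm) *m thbar = 1 *: thbar - Rm *m thbar by rewrite mulmxBl mul1mx scale1r.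
  rewrite ipBZr mul1r.
  suff -> : ip th (Rm *m thbar) = 0 by rewrite subr0.
  rewrite /ip trmx_mul -hT mulmxA mxtrace_mulC mulmxA h0 mul0mx.
  exact: mxtrace0.
have e4 : frob2 ((1%:M - Rm) *m thbar) = frob2 thbar - ip Rm (thbar *m thbar^T).
  have hT1 : (1%:M - Rm)^T = 1%:M - Rm.
    by rewrite linearB /= tr_scalar_mx -hT.
  have hS : (1%:M - Rm)^T *m (1%:M - Rm) = 1%:M - Rm.
    by rewrite hT1 mulmxBl !mulmxBr !mul1mx !mulmx1 hI subrr subr0.
  rewrite /frob2 /ip !trmx_mul trmxK hT1.
  rewrite hT1 in hS.
  rewrite mulmxA mxtrace_mulC !mulmxA hS !mulmxBl !mul1mx.
  by rewrite raddfB.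
rewrite e1 e2 frob2B e3 e4; ring.
Qed.
Definition Wd (R : realType) (m : nat) (U X : 'M[R]_m) (l : 'I_m) : R :=
  (U^T *m X *m U) l l.

Lemma G_eq (R : realType) (m : nat) (U X : 'M[R]_m) (lam : 'I_m -> R) :
  U^T *m U = 1%:M ->
  \tr X - ip X (U *m diag_mx (\row_j lam j) *m U^T) = \sum_l Wd U X l * (1 - lam l).
Proof.
move=> h; rewrite (tr_UU X h) ip_UDU -sumrB; apply: eq_bigr => l _.
by rewrite mxE /Wd; ring.
Qed.

Lemma sqsum_eq0 (R : realType) (m : nat) (F : 'I_m -> R) :
  \sum_i F i ^+ 2 = 0 -> forall i, F i = 0.
Proof.
move=> h i; have := psumr_eq0P (P:=predT) (fun j _ => sqr_ge0 (F j)) h (i:=i) isT.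
by move/eqP; rewrite sqrf_eq0 => /eqP.
Qed.

Lemma Wd_ge0 (R : realType) (m : nat) (U X : 'M[R]_m) (l : 'I_m) :
  X^T = X -> X *m X = X -> 0 <= Wd U X l.
Proof. by move=> h1 h2; rewrite /Wd symidem_W //; apply: sumr_ge0 => i _; apply: sqr_ge0. Qed.

Lemma Wd_compl (R : realType) (m : nat) (U X : 'M[R]_m) (l : 'I_m) :
  U^T *m U = 1%:M -> 1 - Wd U X l = Wd U (1%:M - X) l.
Proof.
move=> h; rewrite /Wd mulmxBr mulmx1 mulmxBl h !mxE eqxx /=.
by rewrite mulr1n.
Qed.

Lemma symidem_compl (R : realType) (m : nat) (X : 'M[R]_m) :
  X^T = X -> X *m X = X -> (1%:M - X)^T = 1%:M - X /\ (1%:M - X) *m (1%:M - X) = 1%:M - X.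
Proof.
move=> h1 h2; split; first by rewrite linearB /= tr_scalar_mx h1.
by rewrite mulmxBl !mulmxBr !mul1mx !mulmx1 h2 subrr subr0.
Qed.

Lemma Wd_le1 (R : realType) (m : nat) (U X : 'M[R]_m) (l : 'I_m) :
  U^T *m U = 1%:M -> X^T = X -> X *m X = X -> Wd U X l <= 1.
Proof.
move=> h h1 h2; rewrite -subr_ge0 Wd_compl //.
by have [h3 h4] := symidem_compl h1 h2; apply: Wd_ge0.
Qed.

Lemma cnt (R : realType) (m k : nat) : (k <= m)%N ->
  \sum_(l < m | (l < k)%N) (1 : R) = k%:R.
Proof.
move=> hk; rewrite (big_ord_narrow hk) /= sumr_const card_ord.
done.
Qed.

Lemma kcostE (R : realType) (m : nat) (lam : 'I_m -> R) (k : nat) : (k <= m)%N ->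
  kcost lam k = \sum_(l < m) ((l < k)%N%:R * (1 - lam l)).
Proof.
move=> hk; rewrite /kcost -(cnt R hk) -sumrB.
rewrite [RHS](bigID (fun l : 'I_m => (l < k)%N)) /= [X in _ = _ + X]big1 ?addr0.
  by apply: eq_bigr => l ->; rewrite mul1r.
by move=> l /negbTE ->; rewrite mul0r.
Qed.
Lemma kstep (R : realType) (m : nat) (lam : 'I_m -> R) (k' : nat) (h : (k' < m)%N) :
  kcost lam k'.+1 = kcost lam k' + (1 - lam (Ordinal h)).
Proof.
rewrite !kcostE // ?(ltnW h) // (bigD1 (Ordinal h)) //= [in RHS](bigD1 (Ordinal h)) //=.
rewrite ltnSn ltnn mul1r mul0r add0r addrC; congr (_ + _); apply: eq_bigr => l hl.
congr (_%:R * _); rewrite ltnS leq_eqVlt.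
suff -> : (l == k' :> nat) = false by [].
by apply/negbTE; apply: contra hl => /eqP e; apply/eqP/val_inj.
Qed.

Lemma c_neg (R : realType) (m : nat) (lam : 'I_m -> R) (k : nat)
  (hsorted : forall i j : 'I_m, (i <= j)%N -> lam j <= lam i)
  (hkmin : forall k' : nat, (k' <= m)%N -> kcost lam k <= kcost lam k')
  (hkm : (k <= m)%N) (l : 'I_m) : (l < k)%N -> 1 - lam l <= 0.
Proof.
move=> hl; case: k hkm hkmin hl => [//|k] hk hkmin hl.
have := hkmin k (ltnW hk); rewrite kstep => h.
have h2 := hsorted l (Ordinal hk) hl.
rewrite -subr_ge0 in h2; rewrite /= in h2.
have : 1 - lam (Ordinal hk) <= 0 by rewrite -(lerD2l (kcost lam k)) addr0.
move=> h3; lra.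
Qed.

Lemma c_pos (R : realType) (m : nat) (lam : 'I_m -> R) (k : nat)
  (hsorted : forall i j : 'I_m, (i <= j)%N -> lam j <= lam i)
  (hkmin : forall k' : nat, (k' <= m)%N -> kcost lam k <= kcost lam k')
  (l : 'I_m) : (k <= l)%N -> 0 <= 1 - lam l.
Proof.
move=> hl.
have hk : (k < m)%N by apply: leq_ltn_trans hl _.
have := hkmin k.+1 hk; rewrite kstep => h.
have h2 := hsorted (Ordinal hk) l hl.
have : 0 <= 1 - lam (Ordinal hk) by rewrite -(lerD2l (kcost lam k)) addr0.
move=> h3; lra.
Qed.

Lemma c_neg_strict (R : realType) (m : nat) (lam : 'I_m -> R) (k : nat)
  (hsorted : forall i j : 'I_m, (i <= j)%N -> lam j <= lam i)
  (hkmin : forall k' : nat, (k' <= m)%N -> kcost lam k <= kcost lam k')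
  (hu : forall k' : nat, (k' <= m)%N -> kcost lam k' = kcost lam k -> k' = k)
  (hkm : (k <= m)%N) (l : 'I_m) : (l < k)%N -> 1 - lam l < 0.
Proof.
move=> hl; case: k hkm hkmin hu hl => [//|k] hk hkmin hu hl.
have := hkmin k (ltnW hk); rewrite kstep => h.
have h2 := hsorted l (Ordinal hk) hl.
have h3 : 1 - lam (Ordinal hk) != 0.
  apply/eqP => e; have := hu k (ltnW hk); rewrite kstep e addr0.
  by move=> /(_ erefl) /eqP; rewrite -[X in _ == X]addn1 -{1}(addn0 k) eqn_add2l.
have : 1 - lam (Ordinal hk) <= 0 by rewrite -(lerD2l (kcost lam k)) addr0.
rewrite le_eqVlt (negbTE h3) /= => h4; rewrite /= in h2; lra.
Qed.

Lemma c_pos_strict (R : realType) (m : nat) (lam : 'I_m -> R) (k : nat)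
  (hsorted : forall i j : 'I_m, (i <= j)%N -> lam j <= lam i)
  (hkmin : forall k' : nat, (k' <= m)%N -> kcost lam k <= kcost lam k')
  (hu : forall k' : nat, (k' <= m)%N -> kcost lam k' = kcost lam k -> k' = k)
  (l : 'I_m) : (k <= l)%N -> 0 < 1 - lam l.
Proof.
move=> hl.
have hk : (k < m)%N by apply: leq_ltn_trans hl _.
have := hkmin k.+1 hk; rewrite kstep => h.
have h2 := hsorted (Ordinal hk) l hl.
have h3 : 1 - lam (Ordinal hk) != 0.
  apply/eqP => e; have := hu k.+1 hk; rewrite kstep e addr0.
  by move=> /(_ erefl) /eqP; rewrite -[X in X == _]addn1 -{2}(addn0 k) eqn_add2l.
have : 0 <= 1 - lam (Ordinal hk) by rewrite -(lerD2l (kcost lam k)) addr0.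
rewrite le_eqVlt eq_sym (negbTE h3) /= => h4; rewrite /= in h2; lra.
Qed.
Lemma Gineq (R : realType) (m k : nat) (w c : 'I_m -> R) :
  (forall l, 0 <= w l) -> (forall l, w l <= 1) ->
  (forall l : 'I_m, (l < k)%N -> c l <= 0) -> (forall l : 'I_m, (k <= l)%N -> 0 <= c l) ->
  \sum_(l < m) (l < k)%N%:R * c l <= \sum_l w l * c l.
Proof.
move=> h0 h1 hn hp; apply: ler_sum => l _.
case: (ltnP l k) => hl.
  by have := hn l hl; have := h1 l; rewrite mul1r => ??; nra.
by have := hp l hl; have := h0 l; rewrite mul0r => ??; nra.
Qed.

Lemma Geq (R : realType) (m k : nat) (w c : 'I_m -> R) :
  (forall l, 0 <= w l) -> (forall l, w l <= 1) ->
  (forall l : 'I_m, (l < k)%N -> c l < 0) -> (forall l : 'I_m, (k <= l)%N -> 0 < c l) ->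
  \sum_l w l * c l = \sum_(l < m) (l < k)%N%:R * c l ->
  forall l, w l = (l < k)%N%:R.
Proof.
move=> h0 h1 hn hp he.
have hle : forall l, 0 <= w l * c l - (l < k)%N%:R * c l.
  move=> l; case: (ltnP l k) => hl.
    by have := hn l hl; have := h1 l; rewrite mul1r => ??; nra.
  by have := hp l hl; have := h0 l; rewrite mul0r => ??; nra.
have hs : \sum_(l < m) (w l * c l - (l < k)%N%:R * c l) = 0 by rewrite sumrB he subrr.
move=> l; have /= e := psumr_eq0P (P:=predT) (fun l _ => hle l) hs (i:=l) isT.
case: (ltnP l k) => hl.
  rewrite hl in e *.
  have := hn l hl => hc.
  have : (w l - 1) * c l = 0 by rewrite -e mulrBl mul1r.
  move/eqP; rewrite mulf_eq0 => /orP[/eqP ?|/eqP ?]; rewrite ?mulr1n ?mulr0n; lra.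
have hf : (l < k)%N = false by rewrite ltnNge hl.
rewrite hf in e *.
have := hp l hl => hc.
have : w l * c l = 0 by rewrite -e mul0r subr0.
move/eqP; rewrite mulf_eq0 => /orP[/eqP ?|/eqP ?]; rewrite ?mulr1n ?mulr0n; lra.
Qed.

Lemma R_eq (R : realType) (m k : nat) (U Rm : 'M[R]_m) :
  U^T *m U = 1%:M -> Rm^T = Rm -> Rm *m Rm = Rm ->
  (forall l, Wd U Rm l = (l < k)%N%:R) -> Rm = projk U k.
Proof.
move=> hU h1 h2 hw; rewrite projkE.
have hRU : Rm *m U = U *m diag_mx (\row_j ((j < k)%N%:R : R)).
  apply/matrixP => i l; rewrite mul_mx_diag !mxE.
  case: (ltnP l k) => hl.
    have e : Wd U (1%:M - Rm) l = 0 by rewrite -Wd_compl // hw hl subrr.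
    have [h3 h4] := symidem_compl h1 h2.
    rewrite /Wd symidem_W // in e.
    have := sqsum_eq0 e i; rewrite mulmxBl mul1mx !mxE => e2.
    by rewrite mulr1; apply/eqP; rewrite eq_sym -subr_eq0 e2.
  have e : Wd U Rm l = 0 by rewrite hw; case: ltnP hl.
  rewrite /Wd symidem_W // in e.
  by have := sqsum_eq0 e i; rewrite mxE => ->; rewrite mulr0.
have h' := mulmx1C hU.
by rewrite -[LHS]mulmx1 -h' mulmxA hRU.
Qed.
Definition IV (d : measure_display) (T : measurableType d) (R : realType)
  (P : probability T R) (g : T -> R) (v : R) : Prop :=
  P.-integrable setT (EFin \o g) /\ \int[P]_(t in setT) g t = v.

Lemma IV_cst (d : measure_display) (T : measurableType d) (R : realType)
  (P : probability T R) (c : R) : IV P (fun _ => c) c.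
Proof.
split; first exact: finite_measure_integrable_cst.
rewrite Rintegral_cst // (_ : fine _ = 1) ?mulr1 //.
exact: (congr1 fine (probability_setT P)).
Qed.

Lemma IV_add (d : measure_display) (T : measurableType d) (R : realType)
  (P : probability T R) (f g : T -> R) a b :
  IV P f a -> IV P g b -> IV P (fun t => f t + g t) (a + b).
Proof.
move=> [hf ef] [hg eg]; split.
  apply: (eq_integrable measurableT _ _ _ (integrableD measurableT hf hg)) => t _ /=.
  by rewrite EFinD.
by rewrite RintegralD // ef eg.
Qed.

Lemma IV_scale (d : measure_display) (T : measurableType d) (R : realType)
  (P : probability T R) (f : T -> R) a (k : R) :
  IV P f a -> IV P (fun t => k * f t) (k * a).
Proof.
move=> [hf ef]; split.
  apply: (eq_integrable measurableT _ _ _ (integrableZl measurableT k hf)) => t _ /=.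
  by rewrite EFinM.
by rewrite RintegralZl // ef.
Qed.

Lemma IV_sub (d : measure_display) (T : measurableType d) (R : realType)
  (P : probability T R) (f g : T -> R) a b :
  IV P f a -> IV P g b -> IV P (fun t => f t - g t) (a - b).
Proof.
move=> hf hg; have := IV_add hf (IV_scale (-1) hg).
by rewrite mulN1r; under eq_fun do rewrite mulN1r.
Qed.

Lemma IV_sum (d : measure_display) (T : measurableType d) (R : realType)
  (P : probability T R) (I : Type) (s : seq I) (G : I -> T -> R) (v : I -> R) :
  (forall i, IV P (G i) (v i)) ->
  IV P (fun t => \sum_(i <- s) G i t) (\sum_(i <- s) v i).
Proof.
move=> h; elim: s => [|i s ih].
  rewrite big_nil; under eq_fun do rewrite big_nil; exact: IV_cst.
rewrite big_cons; under eq_fun do rewrite big_cons.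
exact: IV_add.
Qed.

Lemma IV_fin (d : measure_display) (T : measurableType d) (R : realType)
  (P : probability T R) (f : T -> R) v :
  IV P f v -> (\int[P]_(t in setT) (f t)%:E)%E = v%:E.
Proof.
move=> [hf <-]; rewrite /Rintegral fineK //.
exact: integrable_fin_num.
Qed.
Lemma abs_le (R : realType) (x : R) : `|x| <= 1 + x ^+ 2.
Proof. by case: (lerP 0 x) => h; [rewrite ger0_norm | rewrite ltr0_norm]; nra. Qed.

Lemma sq_le_sum (R : realType) (n : nat) (F : 'I_n -> R) (j : 'I_n) :
  F j ^+ 2 <= \sum_l F l ^+ 2.
Proof.
rewrite (bigD1 j) //= lerDl; apply: sumr_ge0 => l _; exact: sqr_ge0.
Qed.

Lemma entry_le_frob2 (R : realType) (p q : nat) (A : 'M[R]_(p, q)) i j :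
  A i j ^+ 2 <= frob2 A.
Proof.
rewrite frob2E; apply: le_trans (sq_le_sum (fun l => A i l) j) _.
rewrite (bigD1 i) //= lerDl; apply: sumr_ge0 => l _; apply: sumr_ge0 => l' _; exact: sqr_ge0.
Qed.

Lemma symidem_bound (R : realType) (m : nat) (A : 'M[R]_m) i j :
  A^T = A -> A *m A = A -> A i j ^+ 2 <= 1.
Proof.
move=> h1 h2.
have hd : forall i0, A i0 i0 = \sum_l A i0 l ^+ 2.
  move=> i0; rewrite -{1}h2 mxE; apply: eq_bigr => l _.
  by rewrite -{2}h1 mxE expr2.
have a1 := sq_le_sum (fun l => A i l) j; rewrite /= -hd in a1.
have a2 := sq_le_sum (fun l => A i l) i; rewrite /= -hd in a2.
nra.
Qed.

Lemma frob2_symidem (R : realType) (m : nat) (A : 'M[R]_m) :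
  A^T = A -> A *m A = A -> frob2 A = \sum_i A i i.
Proof. by move=> h1 h2; rewrite /frob2 h1 h2. Qed.
Lemma f_formula (R : realType) (m : nat)
  (d : measure_display) (T : measurableType d) (P : probability T R)
  (R2 : T -> 'M[R]_m) (th2 : T -> 'cV[R]_m)
  (hS : forall t, inS (R2 t) (th2 t))
  (hR2 : forall i j, measurable_fun setT (fun t => R2 t i j))
  (hth2 : forall i j, measurable_fun setT (fun t => th2 t i j))
  (hint : P.-integrable setT (fun t => (frob2 (th2 t))%:E))
  (Rm : 'M[R]_m) (th : 'cV[R]_m) :
  (\int[P]_(t in setT) (loss Rm th (R2 t) (th2 t))%:E)%E =
   (frob2 Rm + frob2 th + (\int[P]_(t in setT) (\tr (R2 t) + frob2 (th2 t)))
     - 2 * (ip Rm (\matrix_(i, j) (\int[P]_(t in setT) R2 t i j))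
            + ip th (\matrix_(i, j) (\int[P]_(t in setT) th2 t i j) : 'cV[R]_m)))%:E.
Proof.
have iR : forall i j, IV P (fun t => R2 t i j) (\int[P]_(t in setT) R2 t i j).
  move=> i j; split => //.
  apply: (le_integrable measurableT (g := EFin \o (fun _ => 2))).
  - by apply/measurable_EFinP; exact: hR2.
  - move=> t _ /=; rewrite ?abse_EFin lee_fin (ger0_norm (_ : 0 <= 2)) //.
    have [h1 [h2 _]] := hS t.
    have := abs_le (R2 t i j); have := symidem_bound i j (esym h1) h2; lra.
  - exact: finite_measure_integrable_cst.
have ith : forall i j, IV P (fun t => th2 t i j) (\int[P]_(t in setT) th2 t i j).
  move=> i j; split => //.
  have [hg _] := IV_add (IV_cst P 1) (conj hint erefl : IV P (fun t => frob2 (th2 t)) _).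
  apply: (le_integrable measurableT _ _ hg).
  - by apply/measurable_EFinP; exact: hth2.
  - move=> t _ /=; rewrite ?abse_EFin lee_fin (ger0_norm (_ : 0 <= 1 + _)); last first.
      by rewrite addr_ge0 // frob2_ge0.
    have := abs_le (th2 t i j); have := entry_le_frob2 (th2 t) i j; lra.
have ih : IV P (fun t => \tr (R2 t) + frob2 (th2 t))
             (\int[P]_(t in setT) (\tr (R2 t) + frob2 (th2 t))).
  split => //.
  have [hI _] := IV_add (IV_sum (index_enum 'I_m) (fun i => iR i i))
                       (conj hint erefl : IV P (fun t => frob2 (th2 t)) _).
  exact: hI.
rewrite (eq_integral (fun t => (frob2 Rm + frob2 th + (\tr (R2 t) + frob2 (th2 t))
     - 2 * (\sum_i \sum_j Rm i j * R2 t i j + \sum_i \sum_j th i j * th2 t i j))%:E)).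
  apply: IV_fin; apply: IV_sub; first exact: IV_add (IV_cst _ _) ih.
  apply: IV_scale; rewrite !ipE; apply: IV_add.
    apply: IV_sum => i; apply: IV_sum => j; rewrite mxE; exact: IV_scale.
  apply: IV_sum => i; apply: IV_sum => j; rewrite mxE; exact: IV_scale.
move=> t _; congr (_%:E).
have [h1 [h2 _]] := hS t.
rewrite /loss !frob2B !ipE (frob2_symidem (esym h1) h2).
rewrite /mxtrace; ring.
Qed.
Lemma projk_idem (R : realType) (m k : nat) (U : 'M[R]_m) :
  U^T *m U = 1%:M -> projk U k *m projk U k = projk U k.
Proof.
move=> hU; rewrite projkE -!mulmxA (mulmxA U^T U) hU mul1mx (mulmxA (diag_mx _)) mulmx_diag.
have e : forall (dd : 'rV[R]_m), (forall j, dd 0 j * dd 0 j = dd 0 j) ->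
    \row_j (dd 0 j * dd 0 j) = dd.
  by move=> dd h; apply/matrixP => i j; rewrite !mxE h (ord1 i).
rewrite e; last by move=> j; rewrite !mxE; case: (j < k)%N; rewrite ?mulr1 ?mulr0.
by rewrite !mulmxA.
Qed.

Lemma projk_inS (R : realType) (m k : nat) (U : 'M[R]_m) (thbar : 'cV[R]_m) :
  U^T *m U = 1%:M -> inS (projk U k) ((1%:M - projk U k) *m thbar).
Proof.
move=> hU; split; first by rewrite projkE trmx_UDU.
split; first exact: projk_idem.
by rewrite mulmxA mulmxBr mulmx1 projk_idem // subrr mul0mx.
Qed.

Lemma Wd_projk (R : realType) (m k : nat) (U : 'M[R]_m) (l : 'I_m) :
  U^T *m U = 1%:M -> Wd U (projk U k) l = (l < k)%N%:R.
Proof.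
move=> hU; rewrite /Wd projkE !mulmxA hU mul1mx -mulmxA hU mulmx1.
by rewrite !mxE eqxx mulr1n.
Qed.

Lemma tr_projk (R : realType) (m k : nat) (U : 'M[R]_m) :
  U^T *m U = 1%:M -> (k <= m)%N -> \tr (projk U k) = k%:R.
Proof.
move=> hU hk; rewrite (tr_UU _ hU) -(cnt R hk) [RHS]big_mkcond /=.
apply: eq_bigr => l _; have := Wd_projk k l hU; rewrite /Wd => ->.
by case: (l < k)%N.
Qed.

Lemma frob2_0 (R : realType) (p q : nat) : frob2 (0 : 'M[R]_(p, q)) = 0.
Proof. by rewrite /frob2 mul0mx mxtrace0. Qed.
Theorem theorem3 (R : realType) (m : nat)
  (d : measure_display) (T : measurableType d) (P : probability T R)
  (R2 : T -> 'M[R]_m) (th2 : T -> 'cV[R]_m)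
  (hS : forall t, inS (R2 t) (th2 t))
  (hR2 : forall i j, measurable_fun setT (fun t => R2 t i j))
  (hth2 : forall i j, measurable_fun setT (fun t => th2 t i j))
  (hint : P.-integrable setT (fun t => (frob2 (th2 t))%:E))
  (lam : 'I_m -> R) (U : 'M[R]_m)
  (hsorted : forall i j : 'I_m, (i <= j)%N -> lam j <= lam i)
  (horth : U^T *m U = 1%:M)
  (hdec : let Rbar := \matrix_(i, j) (\int[P]_(t in setT) R2 t i j) in
          let thbar := \matrix_(i, j) (\int[P]_(t in setT) th2 t i j) in
          2 *: Rbar - thbar *m thbar^T
            = \sum_(j < m) lam j *: (col j U *m (col j U)^T))
  (k : nat) (hk : (k <= m)%N)
  (hkmin : forall k' : nat, (k' <= m)%N -> kcost lam k <= kcost lam k') :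
  let thbar := \matrix_(i, j) (\int[P]_(t in setT) th2 t i j) : 'cV[R]_m in
  let f := fun (Rm : 'M[R]_m) (th : 'cV[R]_m) =>
             (\int[P]_(t in setT) (loss Rm th (R2 t) (th2 t))%:E)%E in
  let Rs := projk U k in
  let ths := (1%:M - Rs) *m thbar in
  [/\ inS Rs ths,
      (forall (Rm : 'M[R]_m) (th : 'cV[R]_m), inS Rm th -> (f Rs ths <= f Rm th)%E)
    & ((forall (Rm : 'M[R]_m) (th : 'cV[R]_m), inS Rm th ->
          f Rm th = f Rs ths -> Rm = Rs /\ th = ths)
       <-> ((forall k' : nat, (k' <= m)%N -> kcost lam k' = kcost lam k -> k' = k)
            /\ gap_at lam k))].
Proof.
move=> thbar f Rs ths.
move: hdec => /= hdec.
set Rbar := \matrix_(i, j) (\int[P]_(t in setT) R2 t i j) : 'M[R]_m.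
have hM : 2 *: Rbar - thbar *m thbar^T = U *m diag_mx (\row_j lam j) *m U^T.
  by rewrite hdec sum_diagE.
pose K := \int[P]_(t in setT) (\tr (R2 t) + frob2 (th2 t)) - frob2 thbar.
have hf : forall Rm th, inS Rm th -> f Rm th =
    (K + \sum_l Wd U Rm l * (1 - lam l) + frob2 (th - (1%:M - Rm) *m thbar))%:E.
  move=> Rm th hin; rewrite /f (f_formula hS hR2 hth2 hint) -/Rbar -/thbar.
  congr EFin.
  have e1 := alg_main hin (esym hM).
  rewrite G_eq // in e1.
  rewrite /K; lra.
have hfs : forall k', (k' <= m)%N ->
    f (projk U k') ((1%:M - projk U k') *m thbar) = (K + kcost lam k')%:E.
  move=> k' hk'; rewrite hf; last exact: projk_inS.
  rewrite subrr frob2_0 addr0 (kcostE lam hk'); congr (_ + _)%:E.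
  by apply: eq_bigr => l _; rewrite Wd_projk.
have hG : forall Rm th, inS Rm th -> kcost lam k <= \sum_l Wd U Rm l * (1 - lam l).
  move=> Rm th [h1 [h2 _]]; rewrite (kcostE lam hk); apply: Gineq.
  - by move=> l; apply: Wd_ge0 => //; rewrite -h1.
  - by move=> l; apply: Wd_le1 => //; rewrite -h1.
  - exact: c_neg.
  - exact: c_pos.
split.
- exact: projk_inS.
- move=> Rm th hin; rewrite /Rs /ths hfs // hf // lee_fin.
  have := hG _ _ hin; have := frob2_ge0 (th - (1%:M - Rm) *m thbar); lra.
split.
- move=> huniq.
  have hu : forall k' : nat, (k' <= m)%N -> kcost lam k' = kcost lam k -> k' = k.
    move=> k' hk' hc.
    have [e _] := huniq (projk U k') ((1%:M - projk U k') *m thbar) (projk_inS k' thbar horth)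
      ltac:(by rewrite /Rs /ths !hfs // hc).
    have := tr_projk horth hk'; rewrite e tr_projk // => /eqP.
    by rewrite eqr_nat => /eqP.
  split => // i j hk0 hi hj.
  rewrite ltNge; apply/negP => hle.
  have hij : (i <= j)%N by rewrite hi hj leq_pred.
  have := hsorted i j hij => hle2.
  have hik : (i < k)%N by rewrite hi prednK.
  have := c_neg hsorted hkmin hk hik => c1.
  have hjk : (k <= j)%N by rewrite hj.
  have := c_pos hsorted hkmin hjk => c2.
  have hkm : (k < m)%N by rewrite -hj.
  have := hu k.+1 hkm; rewrite (kstep lam hkm).
  have -> : lam (Ordinal hkm) = lam j by congr lam; apply: val_inj.
  have -> : 1 - lam j = 0 by lra.
  by rewrite addr0 => /(_ erefl) /eqP; rewrite -[X in _ == X]addn0 -addn1 eqn_add2l.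
- move=> [hu _] Rm th hin heq.
  rewrite hf // /Rs /ths hfs // in heq.
  case: heq => heq.
  have hGk := hG _ _ hin.
  have hfr := frob2_ge0 (th - (1%:M - Rm) *m thbar).
  have hGe : \sum_l Wd U Rm l * (1 - lam l) = kcost lam k by lra.
  have hfr0 : frob2 (th - (1%:M - Rm) *m thbar) = 0 by lra.
  have [h1 [h2 _]] := hin.
  have hw : forall l, Wd U Rm l = (l < k)%N%:R.
    apply: (Geq (c := fun l => 1 - lam l)).
    - by move=> l; apply: Wd_ge0 => //; rewrite -h1.
    - by move=> l; apply: Wd_le1 => //; rewrite -h1.
    - exact: c_neg_strict.
    - exact: c_pos_strict.
    - by rewrite hGe (kcostE lam hk).
  have eR := R_eq horth (esym h1) h2 hw.
  split => //.
  have := frob2_eq0 hfr0 => /eqP; rewrite subr_eq0 => /eqP ->.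
  by rewrite eR.
Qed.
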